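(* Let $p_S$ be the critical probability of bond percolation on the non-p.c.f. Sierpinski gasket $S$, as defined in the context. Then $p_S<0.282$.
   Context: Non-p.c.f. Sierpinski gasket: $S_0$ is the triangle $\{v_0,v_1,v_2\}$ with its three edges. $S_n$ is obtained from $S_{n-1}$ by replacing each triangle $\{x,y,z\}$ of $S_{n-1}$, together with its own three edges, by new vertices $m_{xy},m_{yz},m_{zx},c$ belonging only to this triangle and the six triangles $\{x,m_{xy},c\},\{m_{xy},y,c\},\{y,m_{yz},c\},\{m_{yz},z,c\},\{z,m_{zx},c\},\{m_{zx},x,c\}$, each carrying its own three edges. Thus distinct triangles have disjoint edge sets and parallel edges occur. For example, $S_1$ has the $6$ outer edges once and each of the $6$ segments from the center $c$ to the outer vertices doubled. $S$ denotes the limiting graph. Bond percolation with parameter $p$: each edge receives an i.i.d. uniform $[0,1]$ label $\omega(e)$ and is open if $\omega(e)<p$. Define $p_S=\sup\{p\in[0,1]:\mathbb{P}_p(\text{there is an open path from } v_0 \text{ to } v_1 \text{ in } S_n)\to 0 \text{ as } n\to\infty\}$. *)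

(* Defs.v *)
From HB Require Import structures.
From mathcomp Require Import all_boot all_order all_algebra.
From mathcomp Require Import all_classical all_reals all_analysis.
From Stdlib Require Import Relations.
Set Implicit Arguments. Unset Strict Implicit. Unset Printing Implicit Defensive.
Import Order.TTheory GRing.Theory Num.Theory.
Local Open Scope classical_set_scope.
Local Open Scope ring_scope.

(* Vertices: the three original vertices v0,v1,v2 ([Root i]) and the vertices
   created when subdividing the triangle with address [a]:
   [New a 0] = m_xy, [New a 1] = m_yz, [New a 2] = m_zx, [New a 3] = c. *)
Inductive vtx : Type :=
  | Root of 'I_3
  | New of seq 'I_6 & 'I_4.

Definition tri := (vtx * vtx * vtx)%type.

Definition i3 (k : nat) : 'I_3 := inord k.
Definition i4 (k : nat) : 'I_4 := inord k.

Definition child (a : seq 'I_6) (t : tri) (i : 'I_6) : tri :=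
  let: (x, y, z) := t in
  let mxy := New a (i4 0) in let myz := New a (i4 1) in
  let mzx := New a (i4 2) in let c := New a (i4 3) in
  match val i with
  | 0 => (x, mxy, c)
  | 1 => (mxy, y, c)
  | 2 => (y, myz, c)
  | 3 => (myz, z, c)
  | 4 => (z, mzx, c)
  | _ => (mzx, x, c)
  end.

Fixpoint corners_aux (pre : seq 'I_6) (t : tri) (rest : seq 'I_6) : tri :=
  match rest with
  | [::] => t
  | i :: r => corners_aux (rcons pre i) (child pre t i) r
  end.

(* Corners of the level-|a| triangle with address a (a = first-level choice
   first); S_0 is the triangle {v0,v1,v2}. *)
Definition corners (a : seq 'I_6) : tri :=
  corners_aux [::] (Root (i3 0), Root (i3 1), Root (i3 2)) a.

(* Edges of S_n: each level-n triangle carries its own three edges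
   (so parallel edges occur). *)
Definition edge (n : nat) := (n.-tuple 'I_6 * 'I_3)%type.

Definition ends n (e : edge n) : vtx * vtx :=
  let: (x, y, z) := corners (val e.1) in
  match val e.2 with
  | 0 => (x, y)
  | 1 => (y, z)
  | _ => (z, x)
  end.

Definition adj n (O : {set edge n}) (u v : vtx) : Prop :=
  exists2 e, e \in O & (ends e = (u, v) \/ ends e = (v, u)).

Definition open_crossing n (O : {set edge n}) : Prop :=
  clos_refl_trans vtx (@adj n O) (Root (i3 0)) (Root (i3 1)).

(* P_p(open path from v0 to v1 in S_n): the edges of S_n are open
   independently with probability p (the law of {e : omega(e) < p} under
   i.i.d. uniform labels), summed over all open-edge configurations O. *)
Definition crossing_prob (R : realType) (p : R) (n : nat) : R :=
  \sum_(O : {set edge n})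
     (p ^+ #|O| * (1 - p) ^+ #|~: O| * (`[< open_crossing O >])%:R).

Definition p_S (R : realType) : R :=
  sup [set p : R | (0 <= p <= 1)%R /\ (crossing_prob p n @[n --> \oo] --> 0%R)].

(* Main.v *)
Require Import Defs.
From HB Require Import structures.
From mathcomp Require Import all_boot all_order all_algebra.
From mathcomp Require Import all_classical all_reals all_analysis.
From mathcomp Require Import ring lra.
From Stdlib Require Import Relations.
Import Order.TTheory GRing.Theory Num.Theory.
Set Implicit Arguments. Unset Strict Implicit. Unset Printing Implicit Defensive.
Local Open Scope ring_scope.

Inductive part := PA | P01 | P12 | P20 | PN.
Definition h01 s := match s with PA | P01 => true | _ => false end.
Definition h12 s := match s with PA | P12 => true | _ => false end.
Definition h20 s := match s with PA | P20 => true | _ => false end.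
Definition lep s t := [&& h01 s ==> h01 t, h12 s ==> h12 t & h20 s ==> h20 t].
Definition upk (k : nat) (s : part) : bool :=
  match k with
  | 0 => match s with PA => true | _ => false end
  | 1 => h01 s | 2 => h12 s | 3 => h20 s
  | 4 => h01 s || h12 s | 5 => h12 s || h20 s | 6 => h20 s || h01 s
  | 7 => [|| h01 s, h12 s | h20 s]
  | _ => true end.
Definition sumP {R : realType} (f : part -> R) : R := f PA + f P01 + f P12 + f P20 + f PN.
Definition sec (s t : part) : part :=
  match s, t with
  | PA, PA => PA
  | PA, P01 => PA
  | PA, P12 => PA
  | PA, P20 => P20
  | PA, PN => P20
  | P01, PA => PA
  | P01, P01 => P01
  | P01, P12 => P12
  | P01, P20 => P20
  | P01, PN => PN
  | P12, PA => P12
  | P12, P01 => P12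
  | P12, P12 => P12
  | P12, P20 => PN
  | P12, PN => PN
  | P20, PA => PA
  | P20, P01 => P20
  | P20, P12 => PA
  | P20, P20 => P20
  | P20, PN => P20
  | PN, PA => P12
  | PN, P01 => PN
  | PN, P12 => P12
  | PN, P20 => PN
  | PN, PN => PN
  end.
Definition fin (a b c : part) : part :=
  match a, b, c with
  | PA, PA, PA => PA
  | PA, PA, P01 => PA
  | PA, PA, P12 => PA
  | PA, PA, P20 => PA
  | PA, PA, PN => PA
  | PA, P01, PA => PA
  | PA, P01, P01 => PA
  | PA, P01, P12 => PA
  | PA, P01, P20 => PA
  | PA, P01, PN => PA
  | PA, P12, PA => PA
  | PA, P12, P01 => PA
  | PA, P12, P12 => PA
  | PA, P12, P20 => PA
  | PA, P12, PN => PA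
  | PA, P20, PA => PA
  | PA, P20, P01 => PA
  | PA, P20, P12 => P01
  | PA, P20, P20 => PA
  | PA, P20, PN => P01
  | PA, PN, PA => PA
  | PA, PN, P01 => PA
  | PA, PN, P12 => P01
  | PA, PN, P20 => PA
  | PA, PN, PN => P01
  | P01, PA, PA => PA
  | P01, PA, P01 => PA
  | P01, PA, P12 => PA
  | P01, PA, P20 => PA
  | P01, PA, PN => PA
  | P01, P01, PA => PA
  | P01, P01, P01 => PA
  | P01, P01, P12 => PA
  | P01, P01, P20 => PA
  | P01, P01, PN => PA
  | P01, P12, PA => PA
  | P01, P12, P01 => PA
  | P01, P12, P12 => PA
  | P01, P12, P20 => P01
  | P01, P12, PN => P01
  | P01, P20, PA => PA
  | P01, P20, P01 => PA
  | P01, P20, P12 => P01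
  | P01, P20, P20 => PA
  | P01, P20, PN => P01
  | P01, PN, PA => PA
  | P01, PN, P01 => PA
  | P01, PN, P12 => P01
  | P01, PN, P20 => P01
  | P01, PN, PN => P01
  | P12, PA, PA => PA
  | P12, PA, P01 => PA
  | P12, PA, P12 => PA
  | P12, PA, P20 => P12
  | P12, PA, PN => P12
  | P12, P01, PA => PA
  | P12, P01, P01 => PA
  | P12, P01, P12 => PA
  | P12, P01, P20 => P12
  | P12, P01, PN => P12
  | P12, P12, PA => PA
  | P12, P12, P01 => PA
  | P12, P12, P12 => PA
  | P12, P12, P20 => P12
  | P12, P12, PN => P12
  | P12, P20, PA => PA
  | P12, P20, P01 => P20
  | P12, P20, P12 => P01
  | P12, P20, P20 => P12
  | P12, P20, PN => PN
  | P12, PN, PA => PA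
  | P12, PN, P01 => P20
  | P12, PN, P12 => P01
  | P12, PN, P20 => P12
  | P12, PN, PN => PN
  | P20, PA, PA => PA
  | P20, PA, P01 => PA
  | P20, PA, P12 => PA
  | P20, PA, P20 => PA
  | P20, PA, PN => PA
  | P20, P01, PA => PA
  | P20, P01, P01 => PA
  | P20, P01, P12 => P12
  | P20, P01, P20 => PA
  | P20, P01, PN => P12
  | P20, P12, PA => P20
  | P20, P12, P01 => P20
  | P20, P12, P12 => P20
  | P20, P12, P20 => P20
  | P20, P12, PN => P20
  | P20, P20, PA => PA
  | P20, P20, P01 => PA
  | P20, P20, P12 => P01
  | P20, P20, P20 => PA
  | P20, P20, PN => P01
  | P20, PN, PA => P20
  | P20, PN, P01 => P20
  | P20, PN, P12 => PN
  | P20, PN, P20 => P20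
  | P20, PN, PN => PN
  | PN, PA, PA => PA
  | PN, PA, P01 => PA
  | PN, PA, P12 => PA
  | PN, PA, P20 => P12
  | PN, PA, PN => P12
  | PN, P01, PA => PA
  | PN, P01, P01 => PA
  | PN, P01, P12 => P12
  | PN, P01, P20 => P12
  | PN, P01, PN => P12
  | PN, P12, PA => P20
  | PN, P12, P01 => P20
  | PN, P12, P12 => P20
  | PN, P12, P20 => PN
  | PN, P12, PN => PN
  | PN, P20, PA => PA
  | PN, P20, P01 => P20
  | PN, P20, P12 => P01
  | PN, P20, P20 => P12
  | PN, P20, PN => PN
  | PN, PN, PA => P20
  | PN, PN, P01 => P20
  | PN, PN, P12 => PN
  | PN, PN, P20 => PN
  | PN, PN, PN => PN
  end.
Definition nu {R : realType} (s : part) : R :=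
  match s with
  | PA => (24%:R / 125%:R)
  | P01 => (29%:R / 200%:R)
  | P12 => (29%:R / 200%:R)
  | P20 => (29%:R / 200%:R)
  | PN => (373%:R / 1000%:R)
  end.
Definition sg {R : realType} (s : part) : R :=
  match s with
  | PA => (169249%:R / 1000000%:R)
  | P01 => (841%:R / 40000%:R)
  | P12 => (27077%:R / 125000%:R)
  | P20 => (27077%:R / 125000%:R)
  | PN => (188247%:R / 500000%:R)
  end.
Lemma push_nu (R : realType) (G : part -> R) :
  sumP (fun s => nu s * sumP (fun t => nu t * G (sec s t))) = sumP (fun u => sg u * G u).
Proof. cbv beta iota delta [nu sg sec sumP]. lra. Qed.
Lemma final_k (R : realType) k :
  sumP (fun s : part => nu s * (upk k s)%:R) <=
  sumP (fun a => sg a * sumP (fun b => sg b * sumP (fun c => sg c * (upk k (fin a b c))%:R))) :> R.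
Proof.
do 8 (case: k => [|k]; first by cbv beta iota delta [nu sg fin sumP upk h01 h12 h20 orb nat_of_bool]; lra).
cbv beta iota delta [nu sg fin sumP upk h01 h12 h20 orb nat_of_bool]; lra.
Qed.
Definition dom (R : realType) (m n : part -> R) := forall k,
  sumP (fun s => n s * (upk k s)%:R) <= sumP (fun s => m s * (upk k s)%:R).
Definition monoP (R : realType) (g : part -> R) := forall s t, lep s t -> g s <= g t.

Ltac unf := cbv beta iota delta [sumP upk h01 h12 h20 orb nat_of_bool] in *.

Lemma dom_mono (R : realType) (m n g : part -> R) :
  dom m n -> monoP g -> (forall s, 0 <= g s) ->
  sumP (fun s => n s * g s) <= sumP (fun s => m s * g s).
Proof.
move=> D M G0.
have h0 := D 0%N; have h1 := D 1%N; have h2 := D 2%N; have h3 := D 3%N;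
have h4 := D 4%N; have h5 := D 5%N; have h6 := D 6%N; have h7 := D 7%N; have h8 := D 8%N.
have a1 : g P01 <= g PA by apply: M.
have a2 : g P12 <= g PA by apply: M.
have a3 : g P20 <= g PA by apply: M.
have b1 : g PN <= g P01 by apply: M.
have b2 : g PN <= g P12 by apply: M.
have b3 : g PN <= g P20 by apply: M.
have c0 := G0 PN.
unf.
rewrite ?mulr1 ?mulr0 ?addr0 ?add0r in h0 h1 h2 h3 h4 h5 h6 h7 h8 *.
set A := g PA in a1 a2 a3 *; set x := g P01 in a1 b1 *; set y := g P12 in a2 b2 *;
set z := g P20 in a3 b3 *; set w := g PN in b1 b2 b3 c0 *.
have E1 : forall u v : R, 0 <= u -> 0 <= v -> 0 <= u * v by move=> u v; apply: mulr_ge0.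
case: (lerP x y) => xy; case: (lerP y z) => yz; case: (lerP x z) => xz.
all: nra.
Qed.

Lemma sumP_le (R : realType) (f g : part -> R) : (forall s, f s <= g s) -> sumP f <= sumP g.
Proof. move=> H; rewrite /sumP; have := H PA; have := H P01; have := H P12; have := H P20; have := H PN; lra. Qed.

Lemma sumP_ge0 (R : realType) (f : part -> R) : (forall s, 0 <= f s) -> 0 <= sumP f.
Proof. move=> H; rewrite /sumP; have := H PA; have := H P01; have := H P12; have := H P20; have := H PN; lra. Qed.

Lemma sumP_swap (R : realType) (a b : part -> R) (G : part -> part -> R) :
  sumP (fun s => a s * sumP (fun t => b t * G s t)) =
  sumP (fun t => b t * sumP (fun s => a s * G s t)).
Proof. rewrite /sumP; ring. Qed.

Lemma monoP_sum (R : realType) (c : part -> R) (K : part -> part -> R) :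
  (forall v, 0 <= c v) -> (forall v, monoP (fun u => K u v)) ->
  monoP (fun u => sumP (fun v => c v * K u v)).
Proof. move=> C M s t st; apply: sumP_le => v; apply: ler_wpM2l => //; exact: M. Qed.

Lemma dom2 (R : realType) (m n : part -> R) (G : part -> part -> R) :
  dom m n -> (forall s, 0 <= m s) -> (forall s, 0 <= n s) -> (forall s t, 0 <= G s t) ->
  (forall t, monoP (fun s => G s t)) -> (forall s, monoP (G s)) ->
  sumP (fun s => n s * sumP (fun t => n t * G s t)) <=
  sumP (fun s => m s * sumP (fun t => m t * G s t)).
Proof.
move=> D m0 n0 G0 M1 M2.
apply: (@le_trans _ _ (sumP (fun s => m s * sumP (fun t => n t * G s t)))); last first.
  apply: sumP_le => s; apply: ler_wpM2l => //; exact: dom_mono.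
rewrite sumP_swap [X in _ <= X]sumP_swap.
apply: sumP_le => t; apply: ler_wpM2l => //; apply: dom_mono => //.
Qed.

Lemma sec_mono1 s s' t : lep s s' -> lep (sec s t) (sec s' t).
Proof. by case: s; case: s'; case: t. Qed.
Lemma sec_mono2 s t t' : lep t t' -> lep (sec s t) (sec s t').
Proof. by case: s; case: t; case: t'. Qed.
Lemma fin_mono1 a a' b c : lep a a' -> lep (fin a b c) (fin a' b c).
Proof. by case: a; case: a'; case: b; case: c. Qed.
Lemma fin_mono2 a b b' c : lep b b' -> lep (fin a b c) (fin a b' c).
Proof. by case: a; case: b; case: b'; case: c. Qed.
Lemma fin_mono3 a b c c' : lep c c' -> lep (fin a b c) (fin a b c').
Proof. by case: a; case: b; case: c; case: c'. Qed.
Lemma upk_mono (R : realType) k s t : lep s t -> (upk k s)%:R <= (upk k t)%:R :> R.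
Proof.
move=> H; rewrite ler_nat; move: H.
do 8 (case: k => [|k]; first by case: s; case: t).
by case: s; case: t.
Qed.
Lemma lep_trans s t u : lep s t -> lep t u -> lep s u.
Proof. by case: s; case: t; case: u. Qed.


Definition rootT : tri := (Root (i3 0), Root (i3 1), Root (i3 2)).
Definition tnth3 (t : tri) (j : 'I_3) : vtx :=
  let: (x, y, z) := t in match val j with 0 => x | 1 => y | _ => z end.
Definition map3 (f : vtx -> vtx) (t : tri) : tri :=
  let: (x, y, z) := t in (f x, f y, f z).
Definition phi (i : 'I_6) (v : vtx) : vtx :=
  match v with Root j => tnth3 (child [::] rootT i) j | New a k => New (i :: a) k end.

Lemma corners_aux_phi i pre t rest :
  corners_aux (i :: pre) (map3 (phi i) t) rest = map3 (phi i) (corners_aux pre t rest).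
Proof.
elim: rest pre t => [|j r IH] pre t //=.
rewrite -IH; congr corners_aux.
case: t => [[x y] z] /=; rewrite /child; case: (val j) => [|[|[|[|[|?]]]]] //.
Qed.

Lemma tri_eta (t : tri) : t = (tnth3 t (i3 0), tnth3 t (i3 1), tnth3 t (i3 2)).
Proof.
have v : forall k, (k < 3)%N -> val (i3 k) = k by move=> k hk; exact: inordK.
by case: t => [[x y] z]; rewrite /tnth3 !v.
Qed.

Lemma corners_cons i a : corners (i :: a) = map3 (phi i) (corners a).
Proof.
rewrite /corners /= -corners_aux_phi; congr corners_aux.
by rewrite [LHS]tri_eta.
Qed.

Definition econs n (i : 'I_6) (e : edge n) : edge n.+1 := ([tuple of i :: val e.1], e.2).

Lemma ends_cons n i (e : edge n) :
  ends (econs i e) = (phi i (ends e).1, phi i (ends e).2).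
Proof.
rewrite /ends /= corners_cons.
case: (corners (val e.1)) => [[x y] z] /=.
by case: (val e.2) => [|[|?]].
Qed.

Definition sub n (O : {set edge n.+1}) (i : 'I_6) : {set edge n} :=
  [set e : edge n | econs i e \in O].

Definition conn n (O : {set edge n}) := clos_refl_trans vtx (@adj n O).

Lemma adj_lift n (O : {set edge n.+1}) i u v :
  adj (sub O i) u v -> adj O (phi i u) (phi i v).
Proof.
case=> e; rewrite inE => eO H; exists (econs i e) => //.
rewrite ends_cons; case: H => -> /=; [left|right]; done.
Qed.

Lemma conn_lift n (O : {set edge n.+1}) i u v :
  conn (sub O i) u v -> conn O (phi i u) (phi i v).
Proof.
elim=> [x y H|x|x y z _ H1 _ H2].
- by apply: rt_step; apply: adj_lift.
- exact: rt_refl.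
- exact: rt_trans H1 H2.
Qed.

Lemma conn_sym n (O : {set edge n}) u v : conn O u v -> conn O v u.
Proof.
elim=> [x y [e eO H]|x|x y z _ H1 _ H2].
- apply: rt_step; exists e => //; by case: H; [right|left].
- exact: rt_refl.
- exact: rt_trans H2 H1.
Qed.

Lemma conn_trans n (O : {set edge n}) u v w : conn O u v -> conn O v w -> conn O u w.
Proof. exact: rt_trans. Qed.

Definition real n (O : {set edge n}) (s : part) (u0 u1 u2 : vtx) : Prop :=
  [/\ h01 s -> conn O u0 u1, h12 s -> conn O u1 u2 & h20 s -> conn O u2 u0].

Lemma real_lift n (O : {set edge n.+1}) i s u0 u1 u2 :
  real (sub O i) s u0 u1 u2 -> real O s (phi i u0) (phi i u1) (phi i u2).
Proof. by case=> a b c; split => H; apply: conn_lift; auto. Qed.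

Ltac spec_true := repeat match goal with
  | H : is_true true -> _ |- _ => specialize (H isT)
  | H : true -> _ |- _ => specialize (H isT)
  | H : is_true false -> _ |- _ => clear H
  | H : false -> _ |- _ => clear H
  end.

Ltac solve_conn := solve [ eauto 6 using conn_trans, conn_sym ].

Lemma sec_ok n (O : {set edge n}) s t x m y c :
  real O s x m c -> real O t m y c -> real O (sec s t) x y c.
Proof.
case: s; case: t; move=> [a1 a2 a3] [b1 b2 b3]; split => /= H; simpl in *; spec_true; ((by []) || solve_conn).
Qed.

Lemma fin_ok n (O : {set edge n}) a b d x y z c :
  real O a x y c -> real O b y z c -> real O d z x c -> real O (fin a b d) x y z.
Proof.
case: a; case: b; case: d; move=> [a1 a2 a3] [b1 b2 b3] [d1 d2 d3]; split => /= H;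
  simpl in *; spec_true; (by []) || solve_conn.
Qed.

Definition R0 := Root (i3 0).
Definition R1 := Root (i3 1).
Definition R2 := Root (i3 2).
Definition i6 (k : nat) : 'I_6 := inord k.

Definition st n (O : {set edge n}) : part :=
  let c01 := `[< conn O R0 R1 >] in let c12 := `[< conn O R1 R2 >] in
  let c20 := `[< conn O R2 R0 >] in
  if c01 && c12 then PA else if c01 then P01 else if c12 then P12
  else if c20 then P20 else PN.

Lemma st_h n (O : {set edge n}) :
  [/\ h01 (st O) = `[< conn O R0 R1 >], h12 (st O) = `[< conn O R1 R2 >]
    & h20 (st O) = `[< conn O R2 R0 >]].
Proof.
rewrite /st; case: (asboolP (conn O R0 R1)) => a; case: (asboolP (conn O R1 R2)) => b;
  case: (asboolP (conn O R2 R0)) => c //=.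
all: exfalso; solve [eauto using conn_trans, conn_sym].
Qed.

Lemma st_real n (O : {set edge n}) : real O (st O) R0 R1 R2.
Proof.
case: (st_h O) => e1 e2 e3; split; rewrite ?e1 ?e2 ?e3 => /asboolP //.
Qed.

Lemma st_max n (O : {set edge n}) s : real O s R0 R1 R2 -> lep s (st O).
Proof.
case=> a b c; case: (st_h O) => e1 e2 e3; rewrite /lep e1 e2 e3.
apply/and3P; split; apply/implyP => h; apply/asboolP; auto.
Qed.

Lemma vi3 k : (k < 3)%N -> val (i3 k) = k. Proof. move=> hk; exact: inordK. Qed.
Lemma vi6 k : (k < 6)%N -> val (i6 k) = k. Proof. move=> hk; exact: inordK. Qed.

Ltac copy_tac := move/real_lift; rewrite /phi /tnth3 /child vi6 // /= !vi3.

Section Copies.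
Local Notation mxy := (New [::] (i4 0)).
Local Notation myz := (New [::] (i4 1)).
Local Notation mzx := (New [::] (i4 2)).
Local Notation cc := (New [::] (i4 3)).

Lemma level_step n (O : {set edge n.+1}) :
  lep (fin (sec (st (sub O (i6 0))) (st (sub O (i6 1))))
           (sec (st (sub O (i6 2))) (st (sub O (i6 3))))
           (sec (st (sub O (i6 4))) (st (sub O (i6 5))))) (st O).
Proof.
have c0 : real O (st (sub O (i6 0))) R0 mxy cc by move: (st_real (sub O (i6 0))); copy_tac.
have c1 : real O (st (sub O (i6 1))) mxy R1 cc by move: (st_real (sub O (i6 1))); copy_tac.
have c2 : real O (st (sub O (i6 2))) R1 myz cc by move: (st_real (sub O (i6 2))); copy_tac.
have c3 : real O (st (sub O (i6 3))) myz R2 cc by move: (st_real (sub O (i6 3))); copy_tac.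
have c4 : real O (st (sub O (i6 4))) R2 mzx cc by move: (st_real (sub O (i6 4))); copy_tac.
have c5 : real O (st (sub O (i6 5))) mzx R0 cc by move: (st_real (sub O (i6 5))); copy_tac.
apply: st_max; apply: fin_ok; apply: sec_ok; eassumption.
Qed.
End Copies.


Definition w (R : realType) n (p : R) (O : {set edge n}) : R :=
  \prod_(e : edge n) (if e \in O then p else 1 - p).

Definition peq (s t : part) : bool :=
  match s, t with
  | PA, PA | P01, P01 | P12, P12 | P20, P20 | PN, PN => true
  | _, _ => false end.

Definition mu (R : realType) n (p : R) (s : part) : R :=
  \sum_(O : {set edge n}) w p O * (peq (st O) s)%:R.

Lemma w_ge0 (R : realType) n (p : R) (O : {set edge n}) : 0 <= p <= 1 -> 0 <= w p O.
Proof.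
move=> /andP[p0 p1]; apply: prodr_ge0 => e _; case: ifP => _ //; by rewrite subr_ge0.
Qed.

Lemma mu_ge0 (R : realType) n (p : R) s : 0 <= p <= 1 -> 0 <= mu n p s.
Proof. move=> hp; apply: sumr_ge0 => O _; apply: mulr_ge0; [exact: w_ge0|exact: ler0n]. Qed.

Lemma wE (R : realType) n (p : R) (O : {set edge n}) :
  p ^+ #|O| * (1 - p) ^+ #|~: O| = w p O.
Proof.
rewrite /w (bigID (mem O)) /=.
rewrite [X in _ = X * _](eq_bigr (fun _ => p)); last by move=> e ->.
rewrite [X in _ = _ * X](eq_bigr (fun _ => 1 - p)); last by move=> e /negbTE ->.
rewrite prodr_const; congr (_ * _).
rewrite (eq_bigl (fun e => e \in ~: O)); last by move=> e; rewrite !inE.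
by rewrite prodr_const.
Qed.

Lemma fiberC (R : realType) n (p : R) (g : part -> R) (h : {set edge n} -> R) :
  (forall O, h O = g (st O)) ->
  \sum_(O : {set edge n}) w p O * h O = sumP (fun s => mu n p s * g s).
Proof.
move=> hE; rewrite /sumP /mu !big_distrl -!big_split /=.
apply: eq_bigr => O _; rewrite hE; case: (st O) => /=; ring.
Qed.

Definition tl n (t : n.+1.-tuple 'I_6) : n.-tuple 'I_6 := [tuple of behead t].

Lemma econs_eta n (e : edge n.+1) : econs (thead e.1) (tl e.1, e.2) = e.
Proof.
case: e => t j; rewrite /econs /=; congr pair; apply: val_inj => /=.
by case: t => [[|x s] hs].
Qed.

Lemma tl_cons n i (t : n.-tuple 'I_6) : tl [tuple of i :: val t] = t.
Proof. exact: val_inj. Qed.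

Definition X6 (T : Type) := (T * (T * (T * (T * (T * T)))))%type.

Definition sel6 (T : Type) (t : X6 T) (i : 'I_6) : T :=
  match val i with
  | 0 => t.1 | 1 => t.2.1 | 2 => t.2.2.1 | 3 => t.2.2.2.1 | 4 => t.2.2.2.2.1
  | _ => t.2.2.2.2.2 end.

Definition glue6 n (t : X6 {set edge n}) : {set edge n.+1} :=
  [set e | (tl e.1, e.2) \in sel6 t (thead e.1)].

Definition split6 n (O : {set edge n.+1}) : X6 {set edge n} :=
  (sub O (i6 0), (sub O (i6 1), (sub O (i6 2), (sub O (i6 3), (sub O (i6 4), sub O (i6 5)))))).

Lemma mem_glue n (t : X6 {set edge n}) i e : (econs i e \in glue6 t) = (e \in sel6 t i).
Proof. by rewrite inE /econs /= theadE tl_cons; case: e. Qed.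

Lemma sub_glue n (t : X6 {set edge n}) i : sub (glue6 t) i = sel6 t i.
Proof. by apply/setP => e; rewrite inE mem_glue. Qed.

Lemma sel_split n (O : {set edge n.+1}) i : sel6 (split6 O) i = sub O i.
Proof.
case: i => m hm; rewrite /sel6 /=.
do 6 (case: m hm => [|m] hm; first by congr sub; apply: val_inj; rewrite vi6).
by [].
Qed.

Lemma glue_split n (O : {set edge n.+1}) : glue6 (split6 O) = O.
Proof.
apply/setP => e; rewrite inE sel_split inE econs_eta //.
Qed.

Lemma split_glue n (t : X6 {set edge n}) : split6 (glue6 t) = t.
Proof.
rewrite /split6 !sub_glue /sel6 !vi6 //.
by case: t => [a [b [c [d [e f]]]]].
Qed.

Lemma splitE (R : realType) (X Y : finType) (H : X * Y -> R) :
  \sum_(t : X * Y) H t = \sum_(x : X) \sum_(y : Y) H (x, y).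
Proof. by rewrite pair_bigA; apply: eq_bigr => -[]. Qed.

Lemma psplitE (R : realType) (X Y : finType) (H : X * Y -> R) :
  \prod_(t : X * Y) H t = \prod_(x : X) \prod_(y : Y) H (x, y).
Proof. by rewrite pair_bigA; apply: eq_bigr => -[]. Qed.

Lemma w_glue (R : realType) n (p : R) (t : X6 {set edge n}) :
  w p (glue6 t) = w p t.1 * w p t.2.1 * w p t.2.2.1 * w p t.2.2.2.1 *
                  w p t.2.2.2.2.1 * w p t.2.2.2.2.2.
Proof.
rewrite /w (reindex (fun q : 'I_6 * edge n => econs q.1 q.2)) /=; last first.
  exists (fun e : edge n.+1 => (thead e.1, (tl e.1, e.2))) => [q _|e _].
    by case: q => i [t1 j]; rewrite /econs /= theadE tl_cons.
  exact: econs_eta.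
rewrite psplitE.
under eq_bigr => i _ do under eq_bigr => e _ do rewrite mem_glue.
rewrite !big_ord_recl big_ord0 mulr1 /=.
rewrite !mulrA.
done.
Qed.

Lemma fact6 (R : realType) n (p : R) (F : {set edge n} -> {set edge n} -> {set edge n} ->
    {set edge n} -> {set edge n} -> {set edge n} -> R) :
  \sum_(O : {set edge n.+1}) w p O * F (sub O (i6 0)) (sub O (i6 1)) (sub O (i6 2))
      (sub O (i6 3)) (sub O (i6 4)) (sub O (i6 5)) =
  \sum_(a : {set edge n}) w p a * \sum_(b : {set edge n}) w p b *
  \sum_(c : {set edge n}) w p c * \sum_(d : {set edge n}) w p d *
  \sum_(e : {set edge n}) w p e * \sum_(f : {set edge n}) w p f * F a b c d e f.
Proof.
rewrite (reindex (@glue6 n)) /=; last first.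
  by exists (@split6 n) => [t _|O _]; [exact: split_glue|exact: glue_split].
under eq_bigr => t _ do rewrite w_glue !sub_glue /sel6 !vi6 //.
rewrite splitE; apply: eq_bigr => a _; rewrite big_distrr.
rewrite splitE; apply: eq_bigr => b _; rewrite [RHS]mulrA big_distrr.
rewrite splitE; apply: eq_bigr => c _; rewrite [RHS]mulrA big_distrr.
rewrite splitE; apply: eq_bigr => d _; rewrite [RHS]mulrA big_distrr.
rewrite splitE; apply: eq_bigr => e _; rewrite [RHS]mulrA big_distrr.
apply: eq_bigr => f _ /=; ring.
Qed.

Lemma fiber6 (R : realType) n (p : R) (H : part -> part -> part -> part -> part -> part -> R) :
  \sum_(a : {set edge n}) w p a * \sum_(b : {set edge n}) w p b *
  \sum_(c : {set edge n}) w p c * \sum_(d : {set edge n}) w p d *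
  \sum_(e : {set edge n}) w p e * \sum_(f : {set edge n}) w p f *
     H (st a) (st b) (st c) (st d) (st e) (st f) =
  sumP (fun s0 => mu n p s0 * sumP (fun s1 => mu n p s1 * sumP (fun s2 => mu n p s2 *
  sumP (fun s3 => mu n p s3 * sumP (fun s4 => mu n p s4 * sumP (fun s5 => mu n p s5 *
     H s0 s1 s2 s3 s4 s5)))))).
Proof.
apply: fiberC => a; apply: fiberC => b; apply: fiberC => c; apply: fiberC => d;
apply: fiberC => e; apply: fiberC => f; done.
Qed.


Lemma nu_ge0 (R : realType) s : 0 <= nu s :> R.
Proof. case: s; apply: divr_ge0; apply: ler0n. Qed.
Lemma sg_ge0 (R : realType) s : 0 <= sg s :> R.
Proof. case: s; apply: divr_ge0; apply: ler0n. Qed.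

Lemma stage (R : realType) (m : part -> R) (G : part -> R) :
  dom m nu -> (forall s, 0 <= m s) -> monoP G -> (forall s, 0 <= G s) ->
  sumP (fun u => sg u * G u) <= sumP (fun s => m s * sumP (fun t => m t * G (sec s t))).
Proof.
move=> D m0 M G0; rewrite -push_nu; apply: dom2 => //.
- exact: nu_ge0.
- move=> t s s' h; apply: M; exact: sec_mono1.
- move=> s t t' h; apply: M; exact: sec_mono2.
Qed.

Definition K (R : realType) k (a b c : part) : R := (upk k (fin a b c))%:R.

Lemma level_dom (R : realType) n (p : R) : 0 <= p <= 1 -> dom (mu n p) nu -> dom (mu n.+1 p) nu.
Proof.
move=> hp D k.
have m0 : forall s, 0 <= mu n p s by move=> s; exact: mu_ge0.
rewrite -(@fiberC R n.+1 p (fun s => (upk k s)%:R) (fun O => (upk k (st O))%:R)) //.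
apply: (@le_trans _ _ (\sum_(O : {set edge n.+1}) w p O *
   K R k (sec (st (sub O (i6 0))) (st (sub O (i6 1))))
     (sec (st (sub O (i6 2))) (st (sub O (i6 3))))
     (sec (st (sub O (i6 4))) (st (sub O (i6 5)))))); last first.
  apply: ler_sum => O _; apply: ler_wpM2l; first exact: w_ge0.
  apply: upk_mono; exact: level_step.
have E1 := @fact6 R n p (fun a b c d e f => K R k (sec (st a) (st b)) (sec (st c) (st d)) (sec (st e) (st f))).
rewrite E1.
have E2 := @fiber6 R n p (fun s0 s1 s2 s3 s4 s5 => K R k (sec s0 s1) (sec s2 s3) (sec s4 s5)).
rewrite E2.
have FK : sumP (fun s : part => nu s * (upk k s)%:R) <=
  sumP (fun a => sg a * sumP (fun b => sg b * sumP (fun c => sg c * K R k a b c))) := final_k R k.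
apply: le_trans FK _.
have K0 : forall a b c, 0 <= K R k a b c by move=> a b c; exact: ler0n.
have Ka : forall b c, monoP (fun a => K R k a b c).
  by move=> b c a a' h; apply: upk_mono; exact: fin_mono1.
have Kb : forall a c, monoP (fun b => K R k a b c).
  by move=> a c b b' h; apply: upk_mono; exact: fin_mono2.
have Kc : forall a b, monoP (fun c => K R k a b c).
  by move=> a b c c' h; apply: upk_mono; exact: fin_mono3.
have sg0 := @sg_ge0 R.
apply: le_trans; first apply: (stage (G := fun a => sumP (fun b => sg b * sumP (fun c => sg c * K R k a b c)))) => //.
- apply: monoP_sum => // b; apply: monoP_sum => // c; exact: Ka.
- move=> a; apply: sumP_ge0 => b; apply: mulr_ge0 => //; apply: sumP_ge0 => c; exact: mulr_ge0.
apply: sumP_le => s0; apply: ler_wpM2l => //; apply: sumP_le => s1; apply: ler_wpM2l => //.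
apply: le_trans; first apply: (stage (G := fun b => sumP (fun c => sg c * K R k (sec s0 s1) b c))) => //.
- apply: monoP_sum => // c; exact: Kb.
- move=> b; apply: sumP_ge0 => c; exact: mulr_ge0.
apply: sumP_le => s2; apply: ler_wpM2l => //; apply: sumP_le => s3; apply: ler_wpM2l => //.
apply: (stage (G := fun c => K R k (sec s0 s1) (sec s2 s3) c)) => //.
Qed.


Definition e0 (j : 'I_3) : edge 0 := ([tuple], j).
Definition sel3 (b : bool * (bool * bool)) (j : 'I_3) : bool :=
  match val j with 0 => b.1 | 1 => b.2.1 | _ => b.2.2 end.
Definition glue0 (b : bool * (bool * bool)) : {set edge 0} := [set e | sel3 b e.2].
Definition split0 (O : {set edge 0}) : bool * (bool * bool) :=
  (e0 (i3 0) \in O, (e0 (i3 1) \in O, e0 (i3 2) \in O)).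
Definition s0 (b : bool * (bool * bool)) : part :=
  let: (b0, (b1, b2)) := b in
  if [|| b0 && b1, b1 && b2 | b2 && b0] then PA else if b0 then P01
  else if b1 then P12 else if b2 then P20 else PN.

Lemma e0_eta (e : edge 0) : e0 e.2 = e.
Proof. case: e => t j; rewrite /e0; congr pair; by rewrite (tuple0 t). Qed.

Lemma glue_split0 O : glue0 (split0 O) = O.
Proof.
apply/setP => e; rewrite inE /sel3 /split0.
rewrite -[in RHS](e0_eta e); case: e => t [m hm] /=.
do 3 (case: m hm => [|m] hm; first by congr (e0 _ \in O); apply: val_inj; rewrite /= vi3).
by [].
Qed.

Lemma split_glue0 b : split0 (glue0 b) = b.
Proof. by rewrite /split0 !inE /sel3 /= !vi3 //; case: b => [? [? ?]]. Qed.

Lemma ends_e00 : ends (e0 (i3 0)) = (R0, R1).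
Proof. by rewrite /ends /= vi3. Qed.
Lemma ends_e01 : ends (e0 (i3 1)) = (R1, R2).
Proof. by rewrite /ends /= vi3. Qed.
Lemma ends_e02 : ends (e0 (i3 2)) = (R2, R0).
Proof. by rewrite /ends /= vi3. Qed.

Lemma real0 b : real (glue0 b) (s0 b) R0 R1 R2.
Proof.
have m0 : b.1 -> conn (glue0 b) R0 R1.
  move=> h; apply: rt_step; exists (e0 (i3 0)); last by left; exact: ends_e00.
  by rewrite inE /sel3 /= vi3.
have m1 : b.2.1 -> conn (glue0 b) R1 R2.
  move=> h; apply: rt_step; exists (e0 (i3 1)); last by left; exact: ends_e01.
  by rewrite inE /sel3 /= vi3.
have m2 : b.2.2 -> conn (glue0 b) R2 R0.
  move=> h; apply: rt_step; exists (e0 (i3 2)); last by left; exact: ends_e02.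
  by rewrite inE /sel3 /= vi3.
move: m0 m1 m2; case: b => b0 [b1 b2] /=; case: b0; case: b1; case: b2 => m0 m1 m2;
  split => /= H; simpl in *; spec_true; ((by []) || solve_conn).
Qed.

Lemma w_glue0 (R : realType) (p : R) b :
  w p (glue0 b) = (if b.1 then p else 1 - p) * (if b.2.1 then p else 1 - p) *
                  (if b.2.2 then p else 1 - p).
Proof.
rewrite /w (reindex e0) /=; last first.
  by exists (fun e : edge 0 => e.2) => [j _|e _]; [by [] | exact: e0_eta].
under eq_bigr => j _ do rewrite inE /=.
by rewrite !big_ord_recl big_ord0 mulr1 /= mulrA.
Qed.

Lemma level0 (R : realType) (p : R) : 281%:R / 1000%:R <= p <= 1 -> dom (mu 0 p) nu.
Proof.
move=> /andP[pl pu] k.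
have hp : 0 <= p <= 1 by apply/andP; split => //; apply: le_trans pl; apply: divr_ge0; apply: ler0n.
rewrite -(@fiberC R 0 p (fun s => (upk k s)%:R) (fun O => (upk k (st O))%:R)) //.
apply: (@le_trans _ _ (\sum_(O : {set edge 0}) w p O * (upk k (s0 (split0 O)))%:R)); last first.
  apply: ler_sum => O _; apply: ler_wpM2l; first exact: w_ge0.
  apply: upk_mono; apply: st_max; have := real0 (split0 O); by rewrite glue_split0.
rewrite (reindex glue0); last first.
  by exists split0 => [b _|O _]; [exact: split_glue0 | exact: glue_split0].
under eq_bigr => b _ do rewrite split_glue0 w_glue0.
rewrite !splitE !big_bool /= !splitE !big_bool /=.
have u0 : 0 <= p - 281%:R / 1000%:R by lra.
have v0 : 0 <= 1 - p by lra.
have h1 := mulr_ge0 u0 v0; have h2 := mulr_ge0 u0 u0; have h3 := mulr_ge0 v0 v0.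
have h4 := mulr_ge0 h1 u0; have h5 := mulr_ge0 h1 v0; have h6 := mulr_ge0 h2 u0.
have h7 := mulr_ge0 h3 v0.
case: k => [|[|[|[|[|[|[|[|k]]]]]]]]; cbv beta iota delta [sumP nu upk h01 h12 h20 orb nat_of_bool]; lra.
Qed.


Import numFieldNormedType.Exports.
Local Open Scope classical_set_scope.

Lemma dom_all (R : realType) (p : R) n : 281%:R / 1000%:R <= p <= 1 -> dom (mu n p) nu.
Proof.
move=> hp; elim: n => [|n IH]; first exact: level0.
apply: level_dom => //; case/andP: hp => h1 ->; rewrite andbT.
apply: le_trans h1; apply: divr_ge0; apply: ler0n.
Qed.

Lemma cross_lb (R : realType) (p : R) n : 281%:R / 1000%:R <= p <= 1 ->
  337%:R / 1000%:R <= crossing_prob p n.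
Proof.
move=> hp; rewrite /crossing_prob.
under eq_bigr => O _ do rewrite wE.
have e : forall O : {set edge n}, (`[< open_crossing O >])%:R = (upk 1 (st O))%:R :> R.
  by move=> O; case: (st_h O) => /= -> _ _.
under eq_bigr => O _ do rewrite e.
rewrite (@fiberC R n p (fun s => (upk 1 s)%:R) (fun O => (upk 1 (st O))%:R)) //.
apply: le_trans (dom_all n hp 1%N).
cbv beta iota delta [sumP nu upk h01 h12 h20 orb nat_of_bool]; lra.
Qed.

Theorem theorem4p5 (R : realType) : p_S R < 282%:R / 1000%:R.
Proof.
rewrite /p_S.
set S := (X in sup X).
have ub : forall p, S p -> p <= 281%:R / 1000%:R.
  move=> p [/andP[p0 p1] cv]; rewrite leNgt; apply/negP => hp.
  have lb : forall n, 337%:R / 1000%:R <= crossing_prob p n.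
    by move=> n; apply: cross_lb; rewrite (ltW hp) p1.
  have cvp : cvg (crossing_prob p @ \oo) by apply/cvg_ex; exists 0.
  have := limr_ge cvp (nearW _ lb).
  rewrite (cvg_lim _ cv) //; move=> H; have H1 := H eventually_filter eventually_filter; lra.
case: (eqVneq S set0) => [->|/set0P ne].
  rewrite sup0; apply: divr_gt0; apply: ltr0n.
apply: le_lt_trans (ge_sup ne ub) _; lra.
Qed.
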